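(* Let $\mathfrak{b}$ be the least cardinality of a subset of $\mathbb{N}^\mathbb{N}$ not contained in a $\sigma$-compact subset of $\mathbb{N}^\mathbb{N}$, and let $X=[0,\mathfrak{b})$ be the space of ordinals less than $\mathfrak{b}$ with the order topology. Then $C_c(X)$ has a $\mathfrak{G}$-base and countable $cs^\ast$-character, but $C_c(X)$ has uncountable tightness and uncountable pseudocharacter; in particular $C_c(X)$ is not submetrizable and is not a $\sigma$-space.
   Context: $C_c(X)$ is the space of continuous real-valued functions on $X$ with the compact-open topology. A $\mathfrak{G}$-base is a base $\{U_\alpha:\alpha\in\mathbb{N}^\mathbb{N}\}$ of neighborhoods of zero with $U_\beta\subseteq U_\alpha$ whenever $\alpha\le\beta$ coordinatewise. A family $\mathcal{N}$ is a $cs^\ast$-network at $x$ if for each sequence $(x_n)\to x$ and each neighborhood $O_x$ there is $N\in\mathcal{N}$ with $x\in N\subseteq O_x$ and $\{n:x_n\in N\}$ infinite; the $cs^\ast$-character is the supremum over points of the least size of such a family. Submetrizable means admitting a weaker metrizable topology. A $\sigma$-space is a regular space with a $\sigma$-locally finite network. *)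

(* Defs.v *)
From Stdlib Require Import Reals List Classical.

Definition set (T : Type) := T -> Prop.

Definition is_topology {T : Type} (op : set T -> Prop) : Prop :=
  op (fun _ => True) /\
  (forall U V, op U -> op V -> op (fun x => U x /\ V x)) /\
  (forall F : set T -> Prop, (forall U, F U -> op U) ->
     op (fun x => exists U, F U /\ U x)).

Definition is_nbhd {T : Type} (op : set T -> Prop) (x : T) (N : set T) : Prop :=
  exists U, op U /\ U x /\ (forall y, U y -> N y).

Definition closure {T : Type} (op : set T -> Prop) (A : set T) (x : T) : Prop :=
  forall U, op U -> U x -> exists y, U y /\ A y.

Definition compact_in {T : Type} (op : set T -> Prop) (K : set T) : Prop :=
  forall F : set T -> Prop,
    (forall U, F U -> op U) ->
    (forall x, K x -> exists U, F U /\ U x) ->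
    exists L : list (set T),
      (forall U, In U L -> F U) /\ (forall x, K x -> exists U, In U L /\ U x).

Definition converges {T : Type} (op : set T -> Prop) (s : nat -> T) (x : T) : Prop :=
  forall N, is_nbhd op x N -> exists n0, forall n, (n0 <= n)%nat -> N (s n).

Definition infinitely_often (P : nat -> Prop) : Prop :=
  forall m, exists n, (m <= n)%nat /\ P n.

Definition G_base_at {T : Type} (op : set T -> Prop) (z : T) : Prop :=
  exists U : (nat -> nat) -> set T,
    (forall a, is_nbhd op z (U a)) /\
    (forall N, is_nbhd op z N -> exists a, forall y, U a y -> N y) /\
    (forall a b : nat -> nat, (forall n, (a n <= b n)%nat) ->
       forall y, U b y -> U a y).

Definition cs_star_network_at {T : Type} (op : set T -> Prop) (x : T)
  (Nw : set T -> Prop) : Prop :=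
  forall s : nat -> T, converges op s x ->
  forall O, is_nbhd op x O ->
  exists N, Nw N /\ N x /\ (forall y, N y -> O y) /\
            infinitely_often (fun n => N (s n)).

(* countable cs*-character: every point has a countable cs*-network
   (a countable family is given as a nat-indexed family; repetitions allowed) *)
Definition countable_cs_star_character {T : Type} (op : set T -> Prop) : Prop :=
  forall x, exists Nw : nat -> set T,
    cs_star_network_at op x (fun N => exists k, N = Nw k).

Definition uncountable_tightness {T : Type} (op : set T -> Prop) : Prop :=
  exists (A : set T) (x : T), closure op A x /\
    forall b : nat -> T, (forall n, A (b n)) ->
      ~ closure op (fun y => exists n, y = b n) x.

Definition uncountable_pseudocharacter {T : Type} (op : set T -> Prop) : Prop :=
  exists x : T, forall U : nat -> set T, (forall n, op (U n) /\ U n x) ->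
    exists y, y <> x /\ forall n, U n y.

Definition is_metric {T : Type} (d : T -> T -> R) : Prop :=
  (forall x y, (0 <= d x y)%R) /\
  (forall x y, d x y = 0%R <-> x = y) /\
  (forall x y, d x y = d y x) /\
  (forall x y z, (d x z <= d x y + d y z)%R).

Definition metric_open {T : Type} (d : T -> T -> R) (U : set T) : Prop :=
  forall x, U x -> exists eps, (0 < eps)%R /\ forall y, (d x y < eps)%R -> U y.

Definition submetrizable {T : Type} (op : set T -> Prop) : Prop :=
  exists d : T -> T -> R, is_metric d /\ forall U, metric_open d U -> op U.

Definition regular_space {T : Type} (op : set T -> Prop) : Prop :=
  forall (x : T) (F : set T), op (fun y => ~ F y) -> ~ F x ->
    exists U V, op U /\ op V /\ U x /\ (forall y, F y -> V y) /\
                (forall y, ~ (U y /\ V y)).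

Definition network {T : Type} (op : set T -> Prop) (Nw : set T -> Prop) : Prop :=
  forall x U, op U -> U x -> exists N, Nw N /\ N x /\ forall y, N y -> U y.

(* locally finite family: each point has a neighbourhood meeting only
   finitely many members (members counted up to extensional equality) *)
Definition locally_finite {T : Type} (op : set T -> Prop) (F : set T -> Prop) : Prop :=
  forall x, exists W, is_nbhd op x W /\
    exists L : list (set T), forall S, F S -> (exists z, W z /\ S z) ->
      exists S', In S' L /\ forall z, S z <-> S' z.

Definition sigma_space {T : Type} (op : set T -> Prop) : Prop :=
  regular_space op /\
  exists Fn : nat -> (set T -> Prop),
    network op (fun S => exists n, Fn n S) /\ forall n, locally_finite op (Fn n).

(* product topology on N^N *)
Definition baire_open (U : set (nat -> nat)) : Prop :=
  forall x, U x -> exists n, forall y, (forall i, (i < n)%nat -> y i = x i) -> U y.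

Definition sigma_compact_baire (S : set (nat -> nat)) : Prop :=
  exists K : nat -> set (nat -> nat),
    (forall n, compact_in baire_open (K n)) /\ forall x, S x <-> exists n, K n x.

Definition not_in_sigma_compact (F : set (nat -> nat)) : Prop :=
  ~ exists S, sigma_compact_baire S /\ forall x, F x -> S x.

Definition injects {A B : Type} (P : set A) (Q : set B) : Prop :=
  exists f : A -> B, (forall x, P x -> Q (f x)) /\
    forall x y, P x -> P y -> f x = f y -> x = y.

Definition bijects {A B : Type} (P : set A) (Q : set B) : Prop :=
  exists f : A -> B, (forall x, P x -> Q (f x)) /\
    (forall x y, P x -> P y -> f x = f y -> x = y) /\
    (forall z, Q z -> exists x, P x /\ f x = z).

Definition strict_well_order {X : Type} (lt : X -> X -> Prop) : Prop :=
  (forall x, ~ lt x x) /\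
  (forall x y z, lt x y -> lt y z -> lt x z) /\
  (forall x y, lt x y \/ x = y \/ lt y x) /\
  well_founded lt.

(* (X, lt) is order-isomorphic to the ordinal b = [0, b):
   a well-order of cardinality b (in bijection with a subset of N^N not
   contained in a sigma-compact set, hence of cardinality >= b) all of whose
   proper initial segments have cardinality < b (no family not contained in
   a sigma-compact set injects into them). *)
Definition is_ordinal_b {X : Type} (lt : X -> X -> Prop) : Prop :=
  strict_well_order lt /\
  (exists F : set (nat -> nat), not_in_sigma_compact F /\
     bijects (fun _ : X => True) F) /\
  (forall x : X, ~ exists F : set (nat -> nat),
       not_in_sigma_compact F /\ injects F (fun y => lt y x)).

Definition order_open {X : Type} (lt : X -> X -> Prop) (U : set X) : Prop :=
  forall x, U x -> exists l u : option X,
    (match l with None => True | Some a => lt a x end) /\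
    (match u with None => True | Some b => lt x b end) /\
    forall y, (match l with None => True | Some a => lt a y end) ->
              (match u with None => True | Some b => lt y b end) -> U y.

Definition continuous_on {X : Type} (lt : X -> X -> Prop) (f : X -> R) : Prop :=
  forall V : R -> Prop, open_set V -> order_open lt (fun x => V (f x)).

Definition CX {X : Type} (lt : X -> X -> Prop) : Type :=
  { f : X -> R | continuous_on lt f }.

(* compact-open topology on C(X): generated by the subbasic sets
   [K, V] = { f | f(K) subset V }, K compact in X, V open in R *)
Definition co_open {X : Type} (lt : X -> X -> Prop) (W : set (CX lt)) : Prop :=
  forall f : CX lt, W f ->
    exists L : list (set X * (R -> Prop)),
      (forall p, In p L ->
         compact_in (order_open lt) (fst p) /\ open_set (snd p) /\
         forall x, fst p x -> snd p (proj1_sig f x)) /\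
      (forall g : CX lt,
         (forall p, In p L -> forall x, fst p x -> snd p (proj1_sig g x)) -> W g).

Lemma const_continuous {X : Type} (lt : X -> X -> Prop) (c : R) :
  continuous_on lt (fun _ => c).
Proof.
  intros V _ x Hx. exists None, None. simpl. repeat split; auto.
Qed.

Definition zeroC {X : Type} (lt : X -> X -> Prop) : CX lt :=
  exist _ (fun _ => 0%R) (const_continuous lt 0%R).

(* Main.v *)
Require Import Defs.
From Stdlib Require Import Reals List Classical Lia Lra ClassicalEpsilon ProofIrrelevance FunctionalExtensionality.

Lemma fchoice {A B : Type} (P : A -> B -> Prop) :
  (forall a, exists b, P a b) -> exists f : A -> B, forall a, P a (f a).
Proof.
  intros H. exists (fun a => proj1_sig (constructive_indefinite_description _ (H a))).
  intro a. exact (proj2_sig (constructive_indefinite_description _ (H a))).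
Qed.

Definition fincov {T} (F : set T -> Prop) (P : set T) :=
  exists L : list (set T), (forall U, In U L -> F U) /\ (forall x, P x -> exists U, In U L /\ U x).

Definition box (h : nat -> nat) : set (nat -> nat) := fun f => forall i, f i <= h i.

Definition cyl (h : nat -> nat) (s : list nat) : set (nat -> nat) :=
  fun f => box h f /\ forall i, i < length s -> f i = nth i s 0.

Lemma fincov_concat {T} (F : set T -> Prop) (P : nat -> set T) (H : nat) :
  (forall k, k <= H -> fincov F (P k)) ->
  fincov F (fun x => exists k, k <= H /\ P k x).
Proof.
  induction H as [|H IH]; intros Hk.
  - destruct (Hk 0 (le_n 0)) as [L [HL1 HL2]]. exists L. split; auto.
    intros x [k [Hk0 Px]]. assert (k = 0) by lia. subst. auto.
  - destruct IH as [L1 [A1 B1]]. { intros k Hk'. apply Hk. lia. }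
    destruct (Hk (S H) (le_n _)) as [L2 [A2 B2]].
    exists (L1 ++ L2). split.
    + intros U HU. apply in_app_or in HU. destruct HU; auto.
    + intros x [k [Hk0 Px]]. destruct (Nat.eq_dec k (S H)) as [->|Hne].
      * destruct (B2 x Px) as [U [HU Ux]]. exists U. split; auto. apply in_or_app; auto.
      * destruct (B1 x) as [U [HU Ux]]. exists k. split; auto. lia.
        exists U. split; auto. apply in_or_app; auto.
Qed.

Lemma cyl_step (h : nat -> nat) (F : set (nat -> nat) -> Prop) (s : list nat) :
  ~ fincov F (cyl h s) -> exists k, ~ fincov F (cyl h (s ++ k :: nil)).
Proof.
  intros Hn. apply NNPP. intro Hc. apply Hn.
  assert (Hall : forall k, fincov F (cyl h (s ++ k :: nil))).
  { intro k. apply NNPP. intro Hk. apply Hc. eauto. }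
  destruct (fincov_concat F (fun k => cyl h (s ++ k :: nil)) (h (length s)) (fun k _ => Hall k))
    as [L [A B]].
  exists L. split; auto. intros x [Hb Hx]. apply B. exists (x (length s)). split; [apply Hb|].
  split; auto. intros i Hi. rewrite length_app in Hi. simpl in Hi.
  destruct (Nat.eq_dec i (length s)) as [->|Hne].
  - rewrite app_nth2 by lia. rewrite Nat.sub_diag. reflexivity.
  - rewrite app_nth1 by lia. apply Hx. lia.
Qed.

Lemma box_compact (h : nat -> nat) : compact_in baire_open (box h).
Proof.
  intros F HF Hcov. apply NNPP. intro Hn0.
  assert (Hn : ~ fincov F (cyl h nil)).
  { intros [L [A B]]. apply Hn0. exists L. split; auto. intros x Hx. apply B. split; auto.
    simpl; intros; lia. }
  destruct (fchoice (fun (s : list nat) k => ~ fincov F (cyl h s) -> ~ fincov F (cyl h (s ++ k :: nil))))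
    as [c Hc].
  { intro s. destruct (classic (fincov F (cyl h s))) as [Hf|Hf].
    - exists 0. intro; contradiction.
    - destruct (cyl_step h F s Hf) as [k Hk]. exists k. auto. }
  set (pre := fix pre n := match n with 0 => nil | S n => pre n ++ c (pre n) :: nil end).
  assert (Hlen : forall n, length (pre n) = n).
  { induction n; simpl; auto. rewrite length_app. simpl. lia. }
  assert (Hnc : forall n, ~ fincov F (cyl h (pre n))).
  { induction n; simpl; auto. }
  assert (Hpref : forall n m i, n <= m -> i < n -> nth i (pre m) 0 = nth i (pre n) 0).
  { intros n m i Hnm Hi. induction Hnm; auto. simpl. rewrite app_nth1; auto. rewrite Hlen. lia. }
  set (p := fun i => nth i (pre (S i)) 0).
  assert (Hp : forall n i, i < n -> p i = nth i (pre n) 0).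
  { intros n i Hi. unfold p. symmetry. apply Hpref; lia. }
  assert (Hpb : box h p).
  { intro i. destruct (classic (exists f, cyl h (pre (S i)) f)) as [[f [Hb Hf]]|Hne].
    - assert (E : f i = p i). { rewrite Hf by (rewrite Hlen; lia). reflexivity. }
      rewrite <- E. apply Hb.
    - exfalso. apply (Hnc (S i)). exists nil. split. intros U []. intros x Hx. exfalso; eauto. }
  destruct (Hcov p Hpb) as [U [FU Up]].
  destruct (HF U FU p Up) as [n Hn'].
  apply (Hnc n). exists (U :: nil). split.
  - intros V [<-|[]]. auto.
  - intros x [Hb Hx]. exists U. split; [left; auto|]. apply Hn'. intros i Hi.
    rewrite Hx by (rewrite Hlen; auto). symmetry. apply Hp. auto.
Qed.
Definition le_star (f g : nat -> nat) := exists n, forall i, n <= i -> f i <= g i.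
Definition small (P : set (nat -> nat)) := exists g, forall f, P f -> le_star f g.

Fixpoint dmx (h : nat -> nat -> nat) (i k : nat) : nat :=
  match k with 0 => h 0 i | S k => Nat.max (dmx h i k) (h (S k) i) end.

Lemma dmx_ge h i n k : n <= k -> h n i <= dmx h i k.
Proof.
  induction 1; simpl. destruct n; simpl; lia. lia.
Qed.

Lemma fin_bound (f : nat -> nat) n : exists k, forall i, i < n -> f i <= k.
Proof.
  induction n as [|n [k Hk]]. exists 0; intros; lia.
  exists (Nat.max k (f n)). intros i Hi. destruct (Nat.eq_dec i n) as [->|]. lia.
  specialize (Hk i). lia.
Qed.

Lemma list_bound (Q : set (nat -> nat) -> nat -> Prop) (L : list (set (nat -> nat))) :
  (forall U, In U L -> exists k, Q U k) -> exists B, forall U, In U L -> exists k, k <= B /\ Q U k.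
Proof.
  induction L as [|U L IH]; intros H. exists 0. intros _ [].
  destruct IH as [B HB]. intros; apply H; right; auto.
  destruct (H U (or_introl eq_refl)) as [k Hk].
  exists (Nat.max B k). intros V [<-|HV]. exists k; split; auto; lia.
  destruct (HB V HV) as [k' [? ?]]. exists k'; split; auto; lia.
Qed.

Lemma compact_bounded (K : set (nat -> nat)) :
  compact_in baire_open K -> exists h, forall f, K f -> forall i, f i <= h i.
Proof.
  intros HK.
  destruct (fchoice (fun i b => forall f, K f -> f i <= b)) as [h Hh]; [|exists h; intros; apply Hh; auto].
  intro i.
  destruct (HK (fun U => exists k, U = (fun f => f i = k))) as [L [A B]].
  - intros U [k ->] x Hx. exists (S i). intros y Hy. rewrite Hy by lia. auto.
  - intros x _. exists (fun f => f i = x i). split; eauto.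
  - destruct (list_bound (fun U k => U = (fun f => f i = k)) L A) as [Bd HB].
    exists Bd. intros f Kf. destruct (B f Kf) as [U [HU Uf]]. destruct (HB U HU) as [k [Hk ->]].
    rewrite Uf. auto.
Qed.

Lemma sc_small (P : set (nat -> nat)) :
  (exists S, sigma_compact_baire S /\ forall x, P x -> S x) -> small P.
Proof.
  intros [S [[K [HK HS]] HP]].
  destruct (fchoice (fun n h => forall f, K n f -> forall i, f i <= h i)) as [h Hh].
  { intro n. apply compact_bounded. auto. }
  exists (fun i => dmx h i i). intros f Pf. destruct (proj1 (HS f) (HP f Pf)) as [n Kf].
  exists n. intros i Hi. eapply Nat.le_trans. apply (Hh n f Kf). apply dmx_ge. auto.
Qed.

Lemma small_sc (P : set (nat -> nat)) :
  small P -> exists S, sigma_compact_baire S /\ forall x, P x -> S x.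
Proof.
  intros [g Hg]. exists (fun f => exists k, box (fun i => Nat.max k (g i)) f). split.
  - exists (fun k => box (fun i => Nat.max k (g i))). split.
    + intro n. apply box_compact.
    + intro x. tauto.
  - intros f Pf. destruct (Hg f Pf) as [n Hn]. destruct (fin_bound f n) as [k Hk].
    exists k. intro i. destruct (Nat.lt_ge_cases i n). specialize (Hk i). lia. specialize (Hn i). lia.
Qed.

Lemma nisc_iff (P : set (nat -> nat)) : not_in_sigma_compact P <-> ~ small P.
Proof.
  unfold not_in_sigma_compact. split.
  - intros H Hs. apply H. apply small_sc. auto.
  - intros H Hs. apply H. apply sc_small. auto.
Qed.

Lemma le_star_trans f g h : le_star f g -> le_star g h -> le_star f h.
Proof.
  intros [n Hn] [m Hm]. exists (n + m). intros i Hi. specialize (Hn i). specialize (Hm i). lia.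
Qed.

Lemma le_star_refl f : le_star f f.
Proof. exists 0. auto. Qed.

Lemma small_sub (P Q : set (nat -> nat)) : small Q -> (forall f, P f -> Q f) -> small P.
Proof. intros [g Hg] H. exists g. auto. Qed.

Lemma small_countable (P : nat -> set (nat -> nat)) :
  (forall n, small (P n)) -> small (fun f => exists n, P n f).
Proof.
  intros H. destruct (fchoice (fun n g => forall f, P n f -> le_star f g) H) as [g Hg].
  exists (fun i => dmx g i i). intros f [n Pf]. destruct (Hg n f Pf) as [m Hm].
  exists (n + m). intros i Hi. eapply Nat.le_trans. apply Hm. lia. apply dmx_ge. lia.
Qed.

Lemma small_union (P Q : set (nat -> nat)) : small P -> small Q -> small (fun f => P f \/ Q f).
Proof.
  intros HP HQ. apply small_sub with (Q := fun f => exists n : nat, (match n with 0 => P | _ => Q end) f).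
  apply small_countable. intros []; auto.
  intros f [H|H]. exists 0; auto. exists 1; auto.
Qed.

Lemma small_single (g : nat -> nat) : small (fun f => f = g).
Proof. exists g. intros f ->. apply le_star_refl. Qed.
Definition OB {X : Type} (lt : X -> X -> Prop) (e : X -> nat -> nat) : Prop :=
  strict_well_order lt /\ ~ small (fun f => exists x, f = e x) /\
  (forall x, ~ exists F, not_in_sigma_compact F /\ injects F (fun y => lt y x)).

Lemma OB_of {X} (lt : X -> X -> Prop) : is_ordinal_b lt -> exists e, OB lt e.
Proof.
  intros [Hwo [[F [HF [e [He1 [He2 He3]]]]] Hseg]].
  exists e. split; [auto|split; [|auto]].
  intro Hs. apply nisc_iff in HF. apply HF. apply small_sub with (1 := Hs).
  intros f Ff. destruct (He3 f Ff) as [x [_ <-]]. eauto.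
Qed.

Definition ole {X} (lt : X -> X -> Prop) (a b : X) := ~ lt b a.

Lemma ob_irr {X} {lt : X -> X -> Prop} {e} : OB lt e -> forall x, ~ lt x x.
Proof. intros [[H _] _]. auto. Qed.
Lemma ob_trans {X} {lt : X -> X -> Prop} {e} : OB lt e -> forall x y z, lt x y -> lt y z -> lt x z.
Proof. intros [[_ [H _]] _]. eauto. Qed.
Lemma ob_tot {X} {lt : X -> X -> Prop} {e} : OB lt e -> forall x y, lt x y \/ x = y \/ lt y x.
Proof. intros [[_ [_ [H _]]] _]. auto. Qed.
Lemma ob_wf {X} {lt : X -> X -> Prop} {e} : OB lt e -> well_founded lt.
Proof. intros [[_ [_ [_ H]]] _]. auto. Qed.

Lemma le_lt_trans {X} {lt : X -> X -> Prop} {e} : OB lt e -> forall a b c, ole lt a b -> lt b c -> lt a c.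
Proof.
  intros H a b c Hab Hbc. destruct (ob_tot H a b) as [h|[->|h]]. eapply ob_trans; eauto. auto.
  contradiction.
Qed.
Lemma lt_le_trans {X} {lt : X -> X -> Prop} {e} : OB lt e -> forall a b c, lt a b -> ole lt b c -> lt a c.
Proof.
  intros H a b c Hab Hbc. destruct (ob_tot H b c) as [h|[<-|h]]. eapply ob_trans; eauto. auto.
  contradiction.
Qed.
Lemma le_trans' {X} {lt : X -> X -> Prop} {e} : OB lt e -> forall a b c, ole lt a b -> ole lt b c -> ole lt a c.
Proof. intros H a b c Hab Hbc Hca. apply Hab. eapply le_lt_trans; eauto. Qed.
Lemma lt_le {X} {lt : X -> X -> Prop} {e} : OB lt e -> forall a b, lt a b -> ole lt a b.
Proof. intros H a b Hab Hba. apply (ob_irr H a). eapply ob_trans; eauto. Qed.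
Lemma le_refl' {X} {lt : X -> X -> Prop} {e} : OB lt e -> forall a, ole lt a a.
Proof. intros H a. apply ob_irr with (1 := H). Qed.
Lemma not_le {X} {lt : X -> X -> Prop} {e} : OB lt e -> forall a b, ~ ole lt a b -> lt b a.
Proof. intros H a b Hn. apply NNPP. exact Hn. Qed.

Lemma wf_min {X} {lt : X -> X -> Prop} {e} : OB lt e ->
  forall P : X -> Prop, (exists x, P x) -> exists m, P m /\ forall y, P y -> ~ lt y m.
Proof.
  intros H P [x Px]. apply NNPP. intro Hn.
  assert (forall z, ~ P z). { intro z. induction z as [z IH] using (well_founded_ind (ob_wf H)).
    intro Pz. apply Hn. exists z. split; auto. intros y Py Hy. apply (IH y Hy Py). }
  exact (H0 x Px).
Qed.

Lemma small_image {X} {lt : X -> X -> Prop} {e} : OB lt e ->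
  forall x (h : X -> nat -> nat), small (fun f => exists y, lt y x /\ f = h y).
Proof.
  intros H x h. apply NNPP. intro Hn. destruct H as [_ [_ Hseg]]. apply (Hseg x).
  exists (fun f => exists y, lt y x /\ f = h y). split. apply nisc_iff. auto.
  exists (fun f => epsilon (inhabits x) (fun y => lt y x /\ f = h y)). split.
  - intros f Hf. exact (proj1 (epsilon_spec (inhabits x) _ Hf)).
  - intros f1 f2 H1 H2 E. rewrite (proj2 (epsilon_spec (inhabits x) _ H1)), (proj2 (epsilon_spec (inhabits x) _ H2)).
    rewrite E. reflexivity.
Qed.

Lemma ob_inh {X} {lt : X -> X -> Prop} {e} : OB lt e -> exists x : X, True.
Proof.
  intros H. apply NNPP. intro Hn. destruct H as [_ [Hs _]]. apply Hs. exists (fun _ => 0).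
  intros f [x _]. exfalso. eauto.
Qed.

Lemma no_max {X} {lt : X -> X -> Prop} {e} : OB lt e -> forall x, exists y, lt x y.
Proof.
  intros H x. apply NNPP. intro Hn. pose proof H as [_ [Hs _]]. apply Hs.
  apply small_sub with (Q := fun f => (exists y, lt y x /\ f = e y) \/ f = e x).
  apply small_union. apply (small_image H). apply small_single.
  intros f [y ->]. destruct (ob_tot H y x) as [h|[->|h]]; eauto. exfalso; eauto.
Qed.

Lemma cbound_le {X} {lt : X -> X -> Prop} {e} : OB lt e ->
  forall s : nat -> X, exists z, forall n, ole lt (s n) z.
Proof.
  intros H s. apply NNPP. intro Hn. pose proof H as [_ [Hs _]]. apply Hs.
  apply small_sub with (Q := fun f => exists n, exists y, lt y (s n) /\ f = e y).
  apply small_countable. intro n. apply (small_image H).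
  intros f [y ->]. apply NNPP. intro Hn2. apply Hn. exists y. intros n Hl. apply Hn2. eauto.
Qed.

Lemma cbound {X} {lt : X -> X -> Prop} {e} : OB lt e ->
  forall s : nat -> X, exists z, forall n, lt (s n) z.
Proof.
  intros H s. destruct (cbound_le H s) as [z Hz]. destruct (no_max H z) as [w Hw].
  exists w. intro n. eapply le_lt_trans; eauto.
Qed.

Lemma succ_ex {X} {lt : X -> X -> Prop} {e} : OB lt e ->
  forall x, exists u, lt x u /\ forall y, lt y u -> ole lt y x.
Proof.
  intros H x. destruct (wf_min H (fun u => lt x u) (no_max H x)) as [u [Hu Hm]].
  exists u. split; auto. intros y Hy Hxy. exact (Hm y Hxy Hy).
Qed.

Lemma lub_ex {X} {lt : X -> X -> Prop} {e} : OB lt e ->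
  forall s : nat -> X, exists l, (forall n, ole lt (s n) l) /\ forall a, lt a l -> exists n, lt a (s n).
Proof.
  intros H s. destruct (wf_min H (fun z => forall n, ole lt (s n) z) (cbound_le H s)) as [l [Hl Hm]].
  exists l. split; auto. intros a Ha. apply NNPP. intro Hn. apply (Hm a); auto.
  intros n Hna. apply Hn. eauto.
Qed.

Definition lower {X} (lt : X -> X -> Prop) (l : option X) (y : X) : Prop :=
  match l with None => True | Some a => lt a y end.

Definition Icomp {X} (lt : X -> X -> Prop) (l : option X) (x : X) : set X :=
  fun y => lower lt l y /\ ole lt y x.

Lemma Icomp_compact {X} {lt : X -> X -> Prop} {e} : OB lt e ->
  forall l x, compact_in (order_open lt) (Icomp lt l x).
Proof.
  intros H l x0 F HF Hcov.
  assert (forall z, ole lt z x0 -> fincov F (Icomp lt l z)).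
  { intro z. induction z as [z IH] using (well_founded_ind (ob_wf H)). intros Hz.
    destruct (classic (lower lt l z)) as [Hlz|Hlz].
    2:{ exists nil. split. intros _ []. intros y [Hy1 Hy2]. exfalso. apply Hlz.
        destruct l as [b|]; simpl in *; auto. eapply lt_le_trans; eauto. }
    destruct (Hcov z (conj Hlz Hz)) as [U [FU Uz]].
    destruct (HF U FU z Uz) as [lo [up [Hlo [Hup HU]]]].
    assert (Hup' : forall y, ole lt y z -> match up with None => True | Some b => lt y b end).
    { intros y Hy. destruct up; simpl in *; auto. eapply le_lt_trans; eauto. }
    destruct lo as [a|].
    2:{ exists (U :: nil). split. intros V [<-|[]]; auto.
        intros y [_ Hy]. exists U. split. left; auto. apply HU; simpl; auto. apply Hup'; auto. }
    simpl in Hlo. destruct (classic (lower lt l a)) as [Hla|Hla].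
    - destruct (IH a Hlo) as [L [A B]]. eapply le_trans'; eauto. apply (lt_le H); auto.
      exists (U :: L). split. intros V [<-|HV]; auto.
      intros y [Hy1 Hy2]. destruct (classic (ole lt y a)) as [Hya|Hya].
      + destruct (B y (conj Hy1 Hya)) as [V [HV Vy]]. exists V. split; auto. right; auto.
      + exists U. split. left; auto. apply HU; simpl. apply (not_le H); auto. apply Hup'; auto.
    - exists (U :: nil). split. intros V [<-|[]]; auto.
      intros y [Hy1 Hy2]. exists U. split. left; auto. apply HU; simpl; [|apply Hup'; auto].
      destruct l as [b|]; simpl in *. 2: contradiction.
      eapply le_lt_trans; eauto. }
  apply H0. apply le_refl' with (1 := H).
Qed.

Lemma single_compact {X} (lt : X -> X -> Prop) (b : X) : compact_in (order_open lt) (fun y => y = b).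
Proof.
  intros F HF Hcov. destruct (Hcov b eq_refl) as [U [FU Ub]]. exists (U :: nil). split.
  intros V [<-|[]]; auto. intros y ->. exists U. split; auto. left; auto.
Qed.

Lemma xlist_bound {X} {lt : X -> X -> Prop} {e} : OB lt e ->
  forall {A} (Q : A -> X -> Prop) (L : list A), (forall a, In a L -> exists w, Q a w) ->
  exists z, forall a, In a L -> exists w, ole lt w z /\ Q a w.
Proof.
  intros H A Q L. induction L as [|a L IH]; intros Hq.
  - destruct (ob_inh H) as [x _]. exists x. intros _ [].
  - destruct IH as [z Hz]. intros; apply Hq; right; auto.
    destruct (Hq a (or_introl eq_refl)) as [w Hw].
    destruct (ob_tot H z w) as [h|h].
    + exists w. intros b [<-|Hb]. exists w. split; auto. apply le_refl' with (1 := H).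
      destruct (Hz b Hb) as [w' [? ?]]. exists w'. split; auto. eapply le_trans'; eauto.
      apply (lt_le H); auto.
    + exists z. intros b [<-|Hb]. exists w. split; auto. destruct h as [->|h]. apply le_refl' with (1 := H).
      apply (lt_le H); auto. auto.
Qed.

Lemma compact_bdd {X} {lt : X -> X -> Prop} {e} : OB lt e ->
  forall K, compact_in (order_open lt) K -> exists z, forall y, K y -> lt y z.
Proof.
  intros H K HK.
  destruct (HK (fun U => exists w, U = (fun y => lt y w))) as [L [A B]].
  - intros U [w ->] y Hy. exists None, (Some w). simpl. auto.
  - intros y _. destruct (no_max H y) as [w Hw]. exists (fun y => lt y w). eauto.
  - destruct (xlist_bound H (fun U w => U = (fun y => lt y w)) L A) as [z Hz].
    exists z. intros y Ky. destruct (B y Ky) as [U [HU Uy]]. destruct (Hz U HU) as [w [Hw ->]].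
    eapply lt_le_trans; eauto.
Qed.
Open Scope R_scope.

Lemma open_ball (c r : R) : open_set (fun x => Rabs (x - c) < r).
Proof.
  intros x Hx. assert (Hd : 0 < r - Rabs (x - c)) by lra.
  exists (mkposreal _ Hd). intros y Hy. unfold disc in Hy. simpl in Hy.
  replace (y - c) with ((y - x) + (x - c)) by ring.
  eapply Rle_lt_trans. apply Rabs_triang. lra.
Qed.

Lemma open_nz : open_set (fun x => x <> 0).
Proof.
  intros x Hx. assert (Hd : 0 < Rabs x) by (apply Rabs_pos_lt; auto).
  exists (mkposreal _ Hd). intros y Hy E. unfold disc in Hy. simpl in Hy. subst y.
  rewrite Rminus_0_l, Rabs_Ropp in Hy. lra.
Qed.

Lemma open_full : open_set (fun _ => True).
Proof. intros x _. exists (mkposreal 1 Rlt_0_1). intros y _. exact I. Qed.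

Definition bset {X} (lt : X -> X -> Prop) (L : list (set X * (R -> Prop))) : set (CX lt) :=
  fun g => forall p, In p L -> forall x, fst p x -> snd p (proj1_sig g x).

Definition valid {X} (lt : X -> X -> Prop) (L : list (set X * (R -> Prop))) : Prop :=
  forall p, In p L -> compact_in (order_open lt) (fst p) /\ open_set (snd p).

Lemma bset_open {X} (lt : X -> X -> Prop) L : valid lt L -> co_open lt (bset lt L).
Proof.
  intros HL f Hf. exists L. split; auto. intros p Hp. destruct (HL p Hp). auto.
Qed.

Lemma co_open_inter {X} (lt : X -> X -> Prop) (U V : set (CX lt)) :
  co_open lt U -> co_open lt V -> co_open lt (fun g => U g /\ V g).
Proof.
  intros HU HV f [Uf Vf]. destruct (HU f Uf) as [L1 [A1 B1]]. destruct (HV f Vf) as [L2 [A2 B2]].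
  exists (L1 ++ L2). split.
  - intros p Hp. apply in_app_or in Hp. destruct Hp; auto.
  - intros g Hg. split; [apply B1|apply B2]; intros p Hp; apply Hg; apply in_or_app; auto.
Qed.

Lemma co_open_full {X} (lt : X -> X -> Prop) : co_open lt (fun _ => True).
Proof. intros f _. exists nil. split. intros _ []. auto. Qed.

Lemma co_open_basic {X} (lt : X -> X -> Prop) (W : set (CX lt)) g :
  co_open lt W -> W g -> exists L, valid lt L /\ bset lt L g /\ forall h, bset lt L h -> W h.
Proof.
  intros HW Wg. destruct (HW g Wg) as [L [A B]]. exists L. split; [|split].
  - intros p Hp. destruct (A p Hp) as [? [? ?]]. auto.
  - intros p Hp. apply A. auto.
  - auto.
Qed.

Lemma valid_bdd {X} {lt : X -> X -> Prop} {e} : OB lt e ->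
  forall L, valid lt L -> exists z, forall p, In p L -> forall x, fst p x -> lt x z.
Proof.
  intros H L HL.
  destruct (xlist_bound H (fun p z => forall x, fst p x -> lt x z) L) as [z Hz].
  - intros p Hp. apply (compact_bdd H). apply HL; auto.
  - exists z. intros p Hp x Hx. destruct (Hz p Hp) as [w [Hw Hw']]. eapply lt_le_trans; eauto.
Qed.

Definition chi {X} (lt : X -> X -> Prop) (z : X) : X -> R :=
  fun y => if excluded_middle_informative (lt z y) then 1 else 0.

Lemma chi_cont {X} {lt : X -> X -> Prop} {e} : OB lt e -> forall z, continuous_on lt (chi lt z).
Proof.
  intros H z V _ y Hy. destruct (classic (lt z y)) as [Hzy|Hzy].
  - exists (Some z), None. simpl. split; auto. split; auto. intros y' Hy' _.
    unfold chi in *. destruct (excluded_middle_informative (lt z y)); [|contradiction].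
    destruct (excluded_middle_informative (lt z y')); [|contradiction]. auto.
  - destruct (succ_ex H z) as [u [Hu Hu']]. exists None, (Some u). simpl. split; auto. split.
    eapply le_lt_trans; eauto. intros y' _ Hy'.
    unfold chi in *. destruct (excluded_middle_informative (lt z y)); [contradiction|].
    destruct (excluded_middle_informative (lt z y')) as [h|]; auto. exfalso. apply (Hu' y' Hy' h).
Qed.

Definition chiC {X} {lt : X -> X -> Prop} {e} (H : OB lt e) (z : X) : CX lt :=
  exist _ (chi lt z) (chi_cont H z).

Lemma chi_le {X} {lt : X -> X -> Prop} z x : ~ lt z x -> chi lt z x = 0.
Proof. intros h. unfold chi. destruct (excluded_middle_informative (lt z x)); tauto. Qed.
Lemma chi_gt {X} {lt : X -> X -> Prop} z x : lt z x -> chi lt z x = 1.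
Proof. intros h. unfold chi. destruct (excluded_middle_informative (lt z x)); tauto. Qed.

Lemma chi_in_basic {X} {lt : X -> X -> Prop} {e} (H : OB lt e) L z :
  bset lt L (zeroC lt) -> (forall p, In p L -> forall x, fst p x -> lt x z) ->
  bset lt L (chiC H z).
Proof.
  intros H0 Hb p Hp x Hx. simpl. rewrite chi_le. apply (H0 p Hp x Hx).
  intro h. apply (ob_irr H z). eapply ob_trans; eauto.
Qed.

Lemma pc0 {X} {lt : X -> X -> Prop} {e} (H : OB lt e) :
  forall U : nat -> set (CX lt), (forall n, co_open lt (U n) /\ U n (zeroC lt)) ->
    exists y, y <> zeroC lt /\ forall n, U n y.
Proof.
  intros U HU.
  destruct (fchoice (fun n L => valid lt L /\ bset lt L (zeroC lt) /\ forall h, bset lt L h -> U n h))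
    as [L HL].
  { intro n. apply co_open_basic; apply HU. }
  destruct (fchoice (fun n z => forall p, In p (L n) -> forall x, fst p x -> lt x z)) as [zs Hz].
  { intro n. apply (valid_bdd H). apply HL. }
  destruct (cbound H zs) as [z Hzz].
  exists (chiC H z). split.
  - intro E. destruct (no_max H z) as [w Hw]. assert (E' := f_equal (fun g => proj1_sig g w) E).
    simpl in E'. rewrite chi_gt in E' by auto. lra.
  - intro n. apply HL. apply chi_in_basic. apply HL. intros p Hp x Hx. eapply ob_trans; eauto.
Qed.

Lemma pt_open {X} (lt : X -> X -> Prop) (b : X) (V : R -> Prop) :
  open_set V -> co_open lt (fun h => V (proj1_sig h b)).
Proof.
  intros HV f Hf. exists ((fun y => y = b, V) :: nil). split.
  - intros p [<-|[]]. simpl. split. apply single_compact. split; auto. intros x ->; auto.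
  - intros g Hg. apply (Hg _ (or_introl eq_refl)). simpl. auto.
Qed.
Lemma cx_ext {X} {lt : X -> X -> Prop} (g h : CX lt) : proj1_sig g = proj1_sig h -> g = h.
Proof. destruct g, h. simpl. intros ->. f_equal. apply proof_irrelevance. Qed.

Lemma small_pos (a : R) : 0 <= a -> (forall n, a < / (INR n + 1)) -> a = 0.
Proof.
  intros Ha Hn. destruct (Req_dec a 0) as [|Hne]; auto. exfalso.
  destruct (archimed_cor1 a) as [N [HN HN0]]. lra.
  specialize (Hn N). assert (0 < INR N) by (apply lt_0_INR; auto).
  assert (/ (INR N + 1) < / INR N) by (apply Rinv_lt_contravar; nra). lra.
Qed.

Lemma tight {X} {lt : X -> X -> Prop} {e} (H : OB lt e) : uncountable_tightness (co_open lt).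
Proof.
  exists (fun g => exists z, g = chiC H z), (zeroC lt). split.
  - intros U HU U0. destruct (co_open_basic lt U _ HU U0) as [L [HL [H0 HLU]]].
    destruct (valid_bdd H L HL) as [z Hz]. exists (chiC H z). split; eauto.
    apply HLU. apply chi_in_basic; auto.
  - intros b Hb Hcl. destruct (fchoice (fun n z => b n = chiC H z) Hb) as [zs Hzs].
    destruct (cbound H zs) as [G HG].
    destruct (Hcl (fun h => Rabs (proj1_sig h G - 0) < /2)) as [y [Hy [n ->]]].
    + apply (pt_open lt G (fun r => Rabs (r - 0) < /2)). apply open_ball.
    + simpl. rewrite Rminus_0_r, Rabs_R0. lra.
    + rewrite Hzs in Hy. simpl in Hy. rewrite chi_gt in Hy by auto.
      rewrite Rminus_0_r, Rabs_R1 in Hy. lra.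
Qed.

Lemma not_submet {X} {lt : X -> X -> Prop} {e} (H : OB lt e) : ~ submetrizable (co_open lt).
Proof.
  intros [d [[Hd0 [Hd1 [Hd2 Hd3]]] Hop]].
  destruct (pc0 H (fun n h => d (zeroC lt) h < / (INR n + 1))) as [y [Hy Hall]].
  - intro n. split.
    + apply Hop. intros x Hx. exists (/ (INR n + 1) - d (zeroC lt) x). split. lra.
      intros y Hy. specialize (Hd3 (zeroC lt) x y). lra.
    + assert (d (zeroC lt) (zeroC lt) = 0) by (apply Hd1; auto). rewrite H0.
      apply Rinv_0_lt_compat. pose proof (pos_INR n). lra.
  - apply Hy. symmetry. apply Hd1. apply small_pos; auto.
Qed.

Definition good {X} (lt : X -> X -> Prop) (S : set (CX lt)) : Prop :=
  exists V, co_open lt V /\ V (zeroC lt) /\ forall z, ~ (V z /\ S z).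

Lemma good_list {X} (lt : X -> X -> Prop) (L : list (set (CX lt))) :
  exists O, co_open lt O /\ O (zeroC lt) /\ forall S, In S L -> good lt S -> forall z, ~ (O z /\ S z).
Proof.
  induction L as [|S L [O [HO1 [HO2 HO3]]]].
  - exists (fun _ => True). split. apply co_open_full. split; [exact I|intros S []].
  - destruct (classic (good lt S)) as [[V [HV1 [HV2 HV3]]]|Hg].
    + exists (fun z => O z /\ V z). split. apply co_open_inter; auto. split; auto.
      intros S' [<-|HS'] Hg' z [[Oz Vz] Sz]. apply (HV3 z); auto.
      apply (HO3 S' HS' Hg' z); auto.
    + exists O. split; auto. split; auto. intros S' [<-|HS'] Hg' z [Oz Sz]. contradiction.
      apply (HO3 S' HS' Hg' z); auto.
Qed.

Lemma not_sigma {X} {lt : X -> X -> Prop} {e} (H : OB lt e) : ~ sigma_space (co_open lt).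
Proof.
  intros [Hreg [Fn [Hnet Hlf]]].
  assert (HO : forall n, exists O, (co_open lt O /\ O (zeroC lt)) /\
             forall N, Fn n N -> good lt N -> forall z, ~ (O z /\ N z)).
  { intro n. destruct (Hlf n (zeroC lt)) as [W [[W' [HW'1 [HW'2 HW'3]]] [L HL]]].
    destruct (good_list lt L) as [O [HO1 [HO2 HO3]]].
    exists (fun z => W' z /\ O z). split. split. apply co_open_inter; auto. auto.
    intros N FN [V [HV1 [HV2 HV3]]] z [[W'z Oz] Nz].
    destruct (HL N FN) as [S' [HS' HS'']]. exists z. auto.
    apply (HO3 S' HS') with (z := z).
    - exists V. split; auto. split; auto. intros z' [Vz' Sz']. apply (HV3 z'). split; auto.
      apply HS''; auto.
    - split; auto. apply HS''; auto. }
  destruct (fchoice _ HO) as [O HO'].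
  destruct (pc0 H O) as [y [Hy Hall]]. intro n. apply HO'.
  destruct (Hreg y (fun h => h = zeroC lt)) as [U [V [HU [HV [Uy [HFV HUV]]]]]].
  - intros h Hh. assert (Hx : exists x, proj1_sig h x <> 0).
    { apply NNPP. intro Hn. apply Hh. apply cx_ext. apply functional_extensionality. intro x.
      apply NNPP. intro. apply Hn. eauto. }
    destruct Hx as [x Hx]. destruct (pt_open lt x (fun r => r <> 0) open_nz h Hx) as [L [A B]].
    exists L. split; auto. intros g Hg E. subst g. apply (B (zeroC lt) Hg). reflexivity.
  - exact Hy.
  - destruct (Hnet y U HU Uy) as [N [[n FN] [Ny NU]]].
    apply (proj2 (HO' n) N FN) with (z := y).
    + exists V. split; auto. split. apply HFV; auto. intros z [Vz Nz]. apply (HUV z). auto.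
    + auto.
Qed.

Lemma pseudo {X} {lt : X -> X -> Prop} {e} (H : OB lt e) : uncountable_pseudocharacter (co_open lt).
Proof.
  exists (zeroC lt). intros U HU. destruct (pc0 H U HU) as [y [Hy Hall]]. eauto.
Qed.
Lemma inv_mono (m n : nat) : (m <= n)%nat -> / (INR n + 1) <= / (INR m + 1).
Proof.
  intros H. apply Rinv_le_contravar. pose proof (pos_INR m). lra. apply le_INR in H. lra.
Qed.

Lemma inv_pos (n : nat) : 0 < / (INR n + 1).
Proof. apply Rinv_0_lt_compat. pose proof (pos_INR n). lra. Qed.

Lemma eps_of_open (V : R -> Prop) c : open_set V -> V c ->
  exists m, forall r, Rabs (r - c) < / (INR m + 1) -> V r.
Proof.
  intros HV Vc. destruct (HV c Vc) as [d Hd]. destruct (archimed_cor1 d (cond_pos d)) as [N [HN HN0]].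
  exists N. intros r Hr. apply Hd. unfold disc. assert (0 < INR N) by (apply lt_0_INR; auto).
  assert (/ (INR N + 1) < / INR N) by (apply Rinv_lt_contravar; nra). lra.
Qed.

Lemma nlist_bound {A} (Q : A -> nat -> Prop) (L : list A) :
  (forall a, In a L -> exists k, Q a k) -> exists B, forall a, In a L -> exists k, (k <= B)%nat /\ Q a k.
Proof.
  induction L as [|a L IH]; intros H. exists 0%nat. intros _ [].
  destruct IH as [B HB]. intros; apply H; right; auto.
  destruct (H a (or_introl eq_refl)) as [k Hk].
  exists (Nat.max B k). intros b [<-|Hb]. exists k; split; auto; lia.
  destruct (HB b Hb) as [k' [? ?]]. exists k'; split; auto; lia.
Qed.

Definition Bset {X} (lt : X -> X -> Prop) (e : X -> nat -> nat) (a : nat -> nat) : set X :=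
  fun x => forall y, ole lt y x -> le_star (e y) a.

Definition Ubase {X} (lt : X -> X -> Prop) (e : X -> nat -> nat) (a : nat -> nat) : set (CX lt) :=
  fun g => forall x, Bset lt e a x -> Rabs (proj1_sig g x) < / (INR (a 0%nat) + 1).

Lemma Gbase {X} {lt : X -> X -> Prop} {e} (H : OB lt e) : G_base_at (co_open lt) (zeroC lt).
Proof.
  exists (Ubase lt e). split; [|split].
  - intro a. assert (Hz : exists z, ~ Bset lt e a z).
    { apply NNPP. intro Hn. pose proof H as [_ [Hs _]]. apply Hs. exists a. intros f [x ->].
      apply NNPP. intro Hn2. apply Hn. exists x. intro HB. apply Hn2. apply HB.
      apply le_refl' with (1 := H). }
    destruct Hz as [z Hz].
    set (eps := / (INR (a 0%nat) + 1)).
    exists (bset lt ((Icomp lt None z, fun r => Rabs (r - 0) < eps) :: nil)). split; [|split].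
    + apply bset_open. intros p [<-|[]]. split. apply (Icomp_compact H). apply open_ball.
    + intros p [<-|[]] x _. simpl. rewrite Rminus_0_r, Rabs_R0. apply inv_pos.
    + intros g Hg x Bx. assert (Hxz : lt x z).
      { apply NNPP. intro Hn. apply Hz. intros y Hy. apply Bx. eapply le_trans'; eauto. }
      specialize (Hg _ (or_introl eq_refl) x). simpl in Hg. rewrite Rminus_0_r in Hg. apply Hg.
      split. exact I. apply (lt_le H); auto.
  - intros N [W [HW [W0 HWN]]].
    destruct (co_open_basic lt W _ HW W0) as [L [HL [H0 HLW]]].
    destruct (valid_bdd H L HL) as [d Hd].
    destruct (nlist_bound (fun p m => forall x, fst p x -> forall r, Rabs r < / (INR m + 1) -> snd p r) L)
      as [M HM].
    { intros p Hp. destruct (classic (exists x, fst p x)) as [[x Hx]|Hn].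
      - destruct (eps_of_open (snd p) 0 (proj2 (HL p Hp))) as [m Hm]. apply (H0 p Hp x Hx).
        exists m. intros _ _ r Hr. apply Hm. rewrite Rminus_0_r. auto.
      - exists 0%nat. intros x Hx. exfalso. eauto. }
    assert (Hsm : small (fun f => (exists y, lt y d /\ f = e y) \/ f = e d)).
    { apply small_union. apply (small_image H). apply small_single. }
    destruct Hsm as [g Hg].
    exists (fun i => Nat.max (g i) M). intros h Hh. apply HWN. apply HLW.
    intros p Hp x Hx. destruct (HM p Hp) as [m [Hm1 Hm2]]. apply (Hm2 x Hx).
    eapply Rlt_le_trans. apply Hh.
    + intros y Hy. eapply le_star_trans. apply Hg.
      destruct (ob_tot H y d) as [h1|[->|h1]]. left; eauto. right; auto.
      exfalso. apply Hy. apply (ob_trans H x d y). apply (Hd p Hp x Hx). exact h1.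
      exists 0%nat. intros i _. lia.
    + apply inv_mono. lia.
  - intros a b Hab h Hh x Bx. eapply Rlt_le_trans. apply Hh.
    + intros y Hy. destruct (Bx y Hy) as [n Hn]. exists n. intros i Hi. specialize (Hn i Hi). specialize (Hab i). lia.
    + apply inv_mono. apply Hab.
Qed.
Definition mx {X} (lt : X -> X -> Prop) (a b : X) : X :=
  if excluded_middle_informative (lt a b) then b else a.

Lemma mx_l {X} {lt : X -> X -> Prop} {e} (H : OB lt e) a b : ole lt a (mx lt a b).
Proof.
  unfold mx. destruct (excluded_middle_informative (lt a b)). apply (lt_le H); auto. apply le_refl' with (1 := H).
Qed.
Lemma mx_r {X} {lt : X -> X -> Prop} {e} (H : OB lt e) a b : ole lt b (mx lt a b).
Proof.
  unfold mx. destruct (excluded_middle_informative (lt a b)). apply le_refl' with (1 := H). auto.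
Qed.

Lemma ev_step {X} {lt : X -> X -> Prop} {e} (H : OB lt e) (f : X -> R) :
  continuous_on lt f -> forall eps, 0 < eps ->
  exists G, forall x y, ole lt G x -> ole lt G y -> Rabs (f x - f y) < eps.
Proof.
  intros Hf eps Heps. apply NNPP. intro Hn.
  assert (Hp : forall G, exists q : X * X, ole lt G (fst q) /\ ole lt G (snd q) /\ eps <= Rabs (f (fst q) - f (snd q))).
  { intro G. apply NNPP. intro Hq. apply Hn. exists G. intros x y Hx Hy. apply Rnot_le_lt. intro Hl.
    apply Hq. exists (x, y). simpl. auto. }
  destruct (fchoice _ Hp) as [pq Hpq].
  destruct (fchoice _ (no_max H)) as [nx Hnx].
  destruct (ob_inh H) as [x0 _].
  set (z := fix z k := match k with 0%nat => x0 | S k => mx lt (fst (pq (nx (z k)))) (snd (pq (nx (z k)))) end).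
  assert (Ha : forall k, lt (z k) (fst (pq (nx (z k)))) /\ ole lt (fst (pq (nx (z k)))) (z (S k))).
  { intro k. split. eapply lt_le_trans; eauto. apply Hpq. apply (mx_l H). }
  assert (Hb : forall k, lt (z k) (snd (pq (nx (z k)))) /\ ole lt (snd (pq (nx (z k)))) (z (S k))).
  { intro k. split. eapply lt_le_trans; eauto. apply Hpq. apply (mx_r H). }
  destruct (lub_ex H z) as [l [Hl1 Hl2]].
  destruct (Hf (fun r => Rabs (r - f l) < eps / 2) (open_ball _ _) l) as [lo [up [Hlo [Hup Hint]]]].
  { rewrite Rminus_diag, Rabs_R0. lra. }
  assert (Hk : exists k, lower lt lo (z k)).
  { destruct lo as [a|]. destruct (Hl2 a Hlo) as [k Hk]. eauto. exists 0%nat. exact I. }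
  destruct Hk as [k Hk].
  assert (Hin : forall w, lt (z k) w -> ole lt w (z (S k)) -> Rabs (f w - f l) < eps / 2).
  { intros w H1 H2. apply Hint.
    - destruct lo as [a|]; simpl in *; auto. eapply ob_trans; eauto.
    - destruct up as [b|]; simpl in *; auto. apply (le_lt_trans H w l b); auto.
      apply (le_trans' H w (z (S k)) l H2 (Hl1 (S k))). }
  pose proof (Hin _ (proj1 (Ha k)) (proj2 (Ha k))). pose proof (Hin _ (proj1 (Hb k)) (proj2 (Hb k))).
  destruct (Hpq (nx (z k))) as [_ [_ Hge]].
  assert (Rabs (f (fst (pq (nx (z k)))) - f (snd (pq (nx (z k))))) < eps).
  { replace (f (fst (pq (nx (z k)))) - f (snd (pq (nx (z k)))))
      with ((f (fst (pq (nx (z k)))) - f l) - (f (snd (pq (nx (z k)))) - f l)) by ring.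
    eapply Rle_lt_trans. apply Rabs_triang. rewrite Rabs_Ropp. lra. }
  lra.
Qed.

Lemma ev_const {X} {lt : X -> X -> Prop} {e} (H : OB lt e) (f : X -> R) :
  continuous_on lt f -> exists G, forall x, ole lt G x -> f x = f G.
Proof.
  intros Hf. destruct (fchoice (fun n G => forall x y, ole lt G x -> ole lt G y -> Rabs (f x - f y) < / (INR n + 1)))
    as [Gs HGs].
  { intro n. apply (ev_step H f Hf). apply inv_pos. }
  destruct (cbound_le H Gs) as [G HG]. exists G. intros x Hx.
  assert (Rabs (f x - f G) = 0). { apply small_pos. apply Rabs_pos. intro n. apply HGs.
    eapply le_trans'; eauto. auto. }
  destruct (Req_dec (f x - f G) 0) as [E|E]. lra. exfalso. exact (Rabs_no_R0 _ E H0).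
Qed.

Lemma lebesgue {X} {lt : X -> X -> Prop} {e} (H : OB lt e) (g : X -> R) K V :
  continuous_on lt g -> compact_in (order_open lt) K -> open_set V -> (forall x, K x -> V (g x)) ->
  exists m, forall x, K x -> forall r, Rabs (r - g x) < / (INR m + 1) -> V r.
Proof.
  intros Hg HK HV HKV.
  destruct (HK (fun U => exists x m, K x /\ (forall r, Rabs (r - g x) < 2 * / (INR m + 1) -> V r) /\
                  U = (fun y => Rabs (g y - g x) < / (INR m + 1)))) as [L [A B]].
  - intros U [x [m [_ [_ ->]]]]. apply (Hg (fun r => Rabs (r - g x) < / (INR m + 1))). apply open_ball.
  - intros x Kx. destruct (eps_of_open V (g x) HV (HKV x Kx)) as [m0 Hm0].
    exists (fun y => Rabs (g y - g x) < / (INR (2 * m0 + 1) + 1)). split.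
    + exists x, (2 * m0 + 1)%nat. split; auto. split; auto. intros r Hr. apply Hm0.
      rewrite plus_INR, mult_INR in Hr.
      assert (E : 2 * / (INR 2 * INR m0 + INR 1 + 1) = / (INR m0 + 1)).
      { simpl. pose proof (pos_INR m0). field. lra. }
      rewrite E in Hr. auto.
    + rewrite Rminus_diag, Rabs_R0. apply inv_pos.
  - destruct (nlist_bound (fun U m => exists x, K x /\ (forall r, Rabs (r - g x) < 2 * / (INR m + 1) -> V r) /\
                  U = (fun y => Rabs (g y - g x) < / (INR m + 1))) L) as [M HM].
    { intros U HU. destruct (A U HU) as [x [m Hm]]. eauto. }
    exists M. intros y Ky r Hr. destruct (B y Ky) as [U [HU Uy]].
    destruct (HM U HU) as [m [Hm [x [Kx [HxV ->]]]]]. apply HxV.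
    pose proof (inv_mono _ _ Hm).
    replace (r - g x) with ((r - g y) + (g y - g x)) by ring.
    eapply Rle_lt_trans. apply Rabs_triang. lra.
Qed.

Lemma Icomp_open {X} {lt : X -> X -> Prop} {e} (H : OB lt e) lo x : order_open lt (Icomp lt lo x).
Proof.
  intros y [Hy1 Hy2]. destruct (succ_ex H x) as [u [Hu Hu']]. exists lo, (Some u). simpl.
  split; auto. split. eapply le_lt_trans; eauto. intros y' H1 H2. split; auto.
Qed.

Lemma unif_nbhd {X} {lt : X -> X -> Prop} {e} (H : OB lt e) (g : CX lt) (z : X) (eps : R) :
  0 < eps -> exists L, valid lt L /\ bset lt L g /\
    forall h, bset lt L h -> forall x, ole lt x z -> Rabs (proj1_sig h x - proj1_sig g x) < 2 * eps.
Proof.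
  intros Heps. set (gf := proj1_sig g).
  set (Fam := fun O : set X => exists x lo, (forall y, Icomp lt lo x y -> Rabs (gf y - gf x) < eps) /\ O = Icomp lt lo x).
  destruct (Icomp_compact H None z Fam) as [L0 [A B]].
  - intros O [x [lo [_ ->]]]. apply (Icomp_open H).
  - intros x _. destruct (proj2_sig g (fun r => Rabs (r - gf x) < eps) (open_ball _ _) x) as [lo [up [Hlo [Hup Hint]]]].
    { rewrite Rminus_diag, Rabs_R0. auto. }
    exists (Icomp lt lo x). split.
    + exists x, lo. split; auto. intros y [Hy1 Hy2]. apply Hint. auto.
      destruct up as [b|]; simpl in *; auto. eapply le_lt_trans; eauto.
    + split; auto. apply le_refl' with (1 := H).
  - assert (Hgen : forall L1 : list (set X), (forall O, In O L1 -> Fam O) ->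
       exists L, valid lt L /\ bset lt L g /\ forall h, bset lt L h -> forall O, In O L1 -> forall y, O y ->
          Rabs (proj1_sig h y - gf y) < 2 * eps).
    { clear A B. intro L1. induction L1 as [|O L1 IH]; intros HF.
      - exists nil. split. intros _ []. split. intros _ []. intros _ _ _ [].
      - destruct IH as [L [HL1 [HL2 HL3]]]. intros; apply HF; right; auto.
        destruct (HF O (or_introl eq_refl)) as [x [lo [Hxl ->]]].
        exists ((Icomp lt lo x, fun r => Rabs (r - gf x) < eps) :: L). split; [|split].
        + intros p [<-|Hp]. split. apply (Icomp_compact H). apply open_ball. auto.
        + intros p [<-|Hp]. simpl. intros y Hy. apply Hxl; auto. apply HL2; auto.
        + intros h Hh O' [<-|HO'] y Hy.
          * specialize (Hh _ (or_introl eq_refl) y Hy). simpl in Hh. specialize (Hxl y Hy).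
            replace (proj1_sig h y - gf y) with ((proj1_sig h y - gf x) - (gf y - gf x)) by ring.
            eapply Rle_lt_trans. apply Rabs_triang. rewrite Rabs_Ropp. lra.
          * apply (HL3 h) with (O := O'); auto. intros p Hp. apply Hh. right; auto. }
    destruct (Hgen L0 A) as [L [HL1 [HL2 HL3]]]. exists L. split; auto. split; auto.
    intros h Hh x Hx. destruct (B x (conj I Hx)) as [O [HO Ox]]. apply (HL3 h Hh O HO x Ox).
Qed.

Lemma unif_conv {X} {lt : X -> X -> Prop} {e} (H : OB lt e) (s : nat -> CX lt) (g : CX lt) :
  converges (co_open lt) s g -> forall eps, 0 < eps -> exists n0, forall n, (n0 <= n)%nat ->
    forall x, Rabs (proj1_sig (s n) x - proj1_sig g x) < 2 * eps.
Proof.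
  intros Hc eps Heps.
  destruct (ev_const H (proj1_sig g) (proj2_sig g)) as [Gg HGg].
  destruct (fchoice (fun n G => forall x, ole lt G x -> proj1_sig (s n) x = proj1_sig (s n) G)) as [Gs HGs].
  { intro n. apply (ev_const H). apply (proj2_sig (s n)). }
  destruct (cbound_le H (fun n => mx lt (Gs n) Gg)) as [T HT].
  destruct (unif_nbhd H g T eps Heps) as [L [HL1 [HL2 HL3]]].
  destruct (Hc (bset lt L)) as [n0 Hn0].
  { exists (bset lt L). split. apply bset_open; auto. split; auto. }
  exists n0. intros n Hn x. destruct (classic (ole lt x T)) as [Hx|Hx].
  - apply HL3; auto.
  - apply (not_le H) in Hx.
    assert (HGT : ole lt Gg T). { apply (le_trans' H _ _ _ (mx_r H (Gs 0%nat) Gg) (HT 0%nat)). }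
    assert (HsT : ole lt (Gs n) T). { apply (le_trans' H _ _ _ (mx_l H (Gs n) Gg) (HT n)). }
    rewrite (HGg x), (HGs n x). rewrite <- (HGg T), <- (HGs n T) by auto.
    apply HL3; auto. apply le_refl' with (1 := H).
    auto. eapply le_trans'; eauto. apply (lt_le H); auto.
    eapply le_trans'; eauto. apply (lt_le H); auto.
Qed.

Lemma cs_char {X} {lt : X -> X -> Prop} {e} (H : OB lt e) : countable_cs_star_character (co_open lt).
Proof.
  intros g. exists (fun k h => forall x, Rabs (proj1_sig h x - proj1_sig g x) < / (INR k + 1)).
  intros s Hs O [W [HW [Wg HWO]]].
  destruct (co_open_basic lt W g HW Wg) as [L [HL [HgL HLW]]].
  destruct (nlist_bound (fun p m => forall x, fst p x -> forall r, Rabs (r - proj1_sig g x) < / (INR m + 1) -> snd p r) L)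
    as [M HM].
  { intros p Hp. apply (lebesgue H). apply (proj2_sig g). apply HL; auto. apply HL; auto. apply HgL; auto. }
  eexists. split. exists M. reflexivity. split; [|split].
  - intro x. rewrite Rminus_diag, Rabs_R0. apply inv_pos.
  - intros h Hh. apply HWO. apply HLW. intros p Hp x Hx. destruct (HM p Hp) as [m [Hm1 Hm2]].
    apply (Hm2 x Hx). eapply Rlt_le_trans. apply Hh. apply inv_mono; auto.
  - destruct (unif_conv H s g Hs (/ (INR M + 1) / 3)) as [n0 Hn0].
    { pose proof (inv_pos M). lra. }
    intro m. exists (Nat.max m n0). split. lia. intro x. pose proof (inv_pos M).
    specialize (Hn0 (Nat.max m n0) ltac:(lia) x). lra.
Qed.

Theorem mainTheorem18 (X : Type) (lt : X -> X -> Prop) (HX : is_ordinal_b lt) :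
  G_base_at (co_open lt) (zeroC lt) /\
  countable_cs_star_character (co_open lt) /\
  uncountable_tightness (co_open lt) /\
  uncountable_pseudocharacter (co_open lt) /\
  ~ submetrizable (co_open lt) /\
  ~ sigma_space (co_open lt).
Proof.
  destruct (OB_of lt HX) as [e H].
  split. exact (Gbase H). split. exact (cs_char H). split. exact (tight H).
  split. exact (pseudo H). split. exact (not_submet H). exact (not_sigma H).
Qed.
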